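(* Let $p$ and $q$ be prime numbers, let $u \geqslant 1$ and $n \geqslant q$ be integers, and let $$f(x) = a_{n}x^{n} + a_{n-1}x^{n-1} + \cdots + a_{q}x^{q} + p^{u} \in \mathbb{Z}[x]$$ with $a_n \neq 0$. Suppose that $p \nmid a_{q}$, that $q \nmid u$, and that $$p^{u} > |a_{n}| + |a_{n-1}| + \cdots + |a_{q}|.$$ Then $f(x)$ is irreducible over $\mathbb{Q}$. *)

(* Defs.v *)
From mathcomp Require Import all_boot all_order all_algebra.
Set Implicit Arguments. Unset Strict Implicit. Unset Printing Implicit Defensive.
Import Order.TTheory GRing.Theory Num.Theory.
Local Open Scope ring_scope.

Definition fpoly (a : nat -> int) (p u q n : nat) : {poly int} :=
  ((p ^ u)%N%:Z)%:P + \sum_(q <= i < n.+1) (a i)%:P * 'X^i.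

(* Main.v *)
Require Import Defs.
From mathcomp Require Import all_boot all_order all_algebra.
From mathcomp Require Import algC.
From mathcomp Require Import zify.
Import Order.TTheory GRing.Theory Num.Theory.
Local Open Scope ring_scope.
Set Implicit Arguments. Unset Strict Implicit.

Definition vv (p : nat) (c : int) : nat := logn p `|c|.
Definition okw (p q u : nat) (c : int) (k M : nat) : bool :=
  (c == 0) || (M <= q * vv p c + u * k)%N.

Lemma dvd_vv p e c : prime p -> c != 0 ->
  (((p ^ e)%N%:Z) %| c)%Z = (e <= vv p c)%N.
Proof. by move=> pp c0; rewrite dvdzE /= pfactor_dvdn // absz_gt0. Qed.

Lemma dvdzB' (d m n : int) : (d %| m)%Z -> (d %| n)%Z -> (d %| m - n)%Z.
Proof. move=> h1 h2; exact: rpredB. Qed.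

Lemma okwD p q u c1 c2 k M : prime p ->
  okw p q u c1 k M -> okw p q u c2 k M -> okw p q u (c1 + c2) k M.
Proof.
move=> pp h1 h2.
have [e1|n1] := eqVneq c1 0; first by move: h2; rewrite e1 add0r.
have [e2|n2] := eqVneq c2 0; first by move: h1; rewrite e2 addr0.
move: h1 h2; rewrite /okw (negPf n1) (negPf n2) /= => h1 h2; apply/orP.
have [e|ns] := eqVneq (c1 + c2) 0; first by left; apply/eqP.
right.
wlog le12 : c1 c2 n1 n2 ns h1 h2 / (vv p c1 <= vv p c2)%N.
  move=> W; case: (leqP (vv p c1) (vv p c2)) => H; first exact: W.
  rewrite addrC; apply: W => //; [by rewrite addrC | exact: ltnW].
have d1 : (((p ^ vv p c1)%N%:Z) %| c1)%Z by rewrite dvd_vv.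
have d2 : (((p ^ vv p c1)%N%:Z) %| c2)%Z by rewrite dvd_vv.
have : (((p ^ vv p c1)%N%:Z) %| c1 + c2)%Z by exact: rpredD.
rewrite dvd_vv // => le; apply: (leq_trans h1); rewrite leq_add2r leq_mul2l le orbT //.
Qed.

Lemma okw0 p q u k M : okw p q u 0 k M.
Proof. by rewrite /okw eqxx. Qed.

Lemma okw_sum p q u (I : Type) (r : seq I) (P : pred I) (F : I -> int) k M :
  prime p -> (forall i, P i -> okw p q u (F i) k M) ->
  okw p q u (\sum_(i <- r | P i) F i) k M.
Proof.
move=> pp H; apply: (big_ind (fun c => okw p q u c k M)) => //.
- by move=> x y; apply: okwD.
Qed.

Lemma okwM p q u x y a b A B :
  okw p q u x a A -> okw p q u y b B -> okw p q u (x * y) (a + b) (A + B).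
Proof.
rewrite /okw; have [->|nx] := eqVneq x 0; first by rewrite mul0r eqxx.
have [->|ny] := eqVneq y 0; first by rewrite mulr0 eqxx.
rewrite /= => h1 h2; rewrite mulf_eq0 (negPf nx) (negPf ny) /=.
rewrite /vv abszM lognM ?absz_gt0 //.
rewrite /vv in h1 h2; lia.
Qed.

Lemma okwW p q u c k M M' : okw p q u c k M -> (M' <= M)%N -> okw p q u c k M'.
Proof. by rewrite /okw => /orP[->//|h] le; rewrite (leq_trans le h) orbT. Qed.

Lemma okw_exact p q u c0 r k M : prime p -> (0 < q)%N -> c0 != 0 ->
  (q * vv p c0 + u * k)%N = M -> okw p q u r k M.+1 ->
  c0 + r != 0 /\ (q * vv p (c0 + r) + u * k)%N = M.
Proof.
move=> pp q0 n0 hM; rewrite /okw.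
have [->|nr] := eqVneq r 0; first by rewrite addr0.
rewrite /= => hr.
have lt : (vv p c0 < vv p r)%N by nia.
have dr : (((p ^ (vv p c0).+1)%N%:Z) %| r)%Z by rewrite dvd_vv.
have nd0 : ~~ (((p ^ (vv p c0).+1)%N%:Z) %| c0)%Z by rewrite dvd_vv // ltnn.
have ns : c0 + r != 0.
  apply: contra nd0 => /eqP e; have Ec : c0 = (c0 + r) - r by rewrite addrK.
  by rewrite {1}Ec e; apply: dvdzB' (dvdz0 _) dr.
split=> //.
have h1 : (vv p c0 <= vv p (c0 + r))%N.
  rewrite -dvd_vv //; apply: rpredD; first by rewrite dvd_vv.
  by rewrite dvd_vv // ltnW.
have h2 : (vv p (c0 + r) < (vv p c0).+1)%N.
  rewrite ltnNge -dvd_vv //; apply: contra nd0 => d.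
  by have := @dvdzB' _ _ _ d dr; rewrite addrK.
have -> : vv p (c0 + r) = vv p c0 by apply/eqP; rewrite eqn_leq h1 -ltnS h2.
by [].
Qed.

Definition ww (p q u : nat) (c : int) (k : nat) : nat := (q * vv p c + u * k)%N.

Lemma coef_lt_size (g : {poly int}) i : g`_i != 0 -> (i < size g)%N.
Proof. by apply: contraR; rewrite -leqNgt => /(nth_default 0) ->. Qed.


Lemma mindata p q u (g : {poly int}) : g != 0 ->
  exists M i1 i2, [/\ g`_i1 != 0, ww p q u g`_i1 i1 = M, g`_i2 != 0,
   ww p q u g`_i2 i2 = M &
   [/\ forall k, okw p q u g`_k k M,
       forall k, (k < i1)%N -> okw p q u g`_k k M.+1 &
       forall k, (i2 < k)%N -> okw p q u g`_k k M.+1 ] ].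
Proof.
move=> g0.
pose P := fun m => [exists k : 'I_(size g), (g`_k != 0) && (ww p q u g`_k k == m)].
have lg : ((size g).-1 < size g)%N by rewrite prednK // size_poly_gt0.
have exP : exists m, P m.
  exists (ww p q u g`_(size g).-1 (size g).-1); apply/existsP.
  exists (Ordinal lg) => /=; rewrite eqxx andbT.
  by have := g0; rewrite -lead_coef_eq0.
case: (ex_minnP exP) => M PM minM.
have allM : forall k, okw p q u g`_k k M.
  move=> k; rewrite /okw; have [//|nk] := eqVneq g`_k 0; rewrite /=.
  apply: minM; apply/existsP; exists (Ordinal (coef_lt_size nk)) => /=.
  by rewrite nk eqxx.
pose Q := fun i => (g`_i != 0) && (ww p q u g`_i i == M).
have exQ : exists i, Q i.
  by case/existsP: PM => [[k hk]] /= /andP[a b]; exists k; rewrite /Q a b.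
have ubQ : forall i, Q i -> (i <= size g)%N.
  by move=> i /andP[a _]; apply: ltnW; apply: coef_lt_size.
case: (ex_minnP exQ) => i1 /andP[n1 /eqP e1] min1.
case: (ex_maxnP exQ ubQ) => i2 /andP[n2 /eqP e2] max2.
exists M, i1, i2; split => //; split => //.
- move=> k lk; have := allM k; rewrite /okw.
  have [//|nk] := eqVneq g`_k 0; rewrite /= leq_eqVlt => /orP[/eqP e|//].
  by have := min1 k; rewrite /Q nk /ww -e eqxx leqNgt lk => /(_ isT).
- move=> k lk; have := allM k; rewrite /okw.
  have [//|nk] := eqVneq g`_k 0; rewrite /= leq_eqVlt => /orP[/eqP e|//].
  by have := max2 k; rewrite /Q nk /ww -e eqxx leqNgt lk => /(_ isT).
Qed.

Lemma coef_ok p q u (g h : {poly int}) k M : prime p ->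
  (forall j, (j <= k)%N -> okw p q u (g`_j * h`_(k - j)) k M) ->
  okw p q u (g * h)`_k k M.
Proof.
move=> pp H; rewrite coefM; apply: okw_sum => // [[j hj]] _ /=; apply: H.
by rewrite -ltnS.
Qed.

Lemma coef_exact p q u (g h : {poly int}) k j0 M : prime p -> (0 < q)%N ->
  (j0 <= k)%N -> g`_j0 * h`_(k - j0) != 0 ->
  ww p q u (g`_j0 * h`_(k - j0)) k = M ->
  (forall j, (j <= k)%N -> j != j0 -> okw p q u (g`_j * h`_(k - j)) k M.+1) ->
  (g * h)`_k != 0 /\ ww p q u (g * h)`_k k = M.
Proof.
move=> pp q0 jk n0 e0 H; have jk' : (j0 < k.+1)%N by [].
rewrite coefM (bigD1 (Ordinal jk')) //=.
apply: okw_exact => //.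
apply: okw_sum => // [[j hj]] /= nj; apply: H; first by rewrite -ltnS.
by apply: contra nj => /eqP e; apply/eqP; apply: val_inj.
Qed.


Lemma ar1 a b c d : (b < c)%N -> (a + c <= d)%N -> (d <= b)%N -> False.
Proof. lia. Qed.

Lemma ar_div q u a b i : prime q -> ~~ (q %| u)%N ->
  (q * a + u * 0 = q * b + u * i)%N -> (q %| i)%N.
Proof.
move=> pq qu; rewrite muln0 addn0 => e.
have e2 : (u * i = q * (a - b))%N by rewrite mulnBr e addKn.
have : (q %| u * i)%N by rewrite e2 dvdn_mulr.
by rewrite Euclid_dvdM // (negPf qu).
Qed.

Lemma ar_ge q u a b : (0 < q)%N ->
  (q * a + u * 0 = q * b + u * q)%N -> (u <= a)%N.
Proof.
move=> q0; rewrite muln0 addn0 => e.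
have : (q * u <= q * a)%N by rewrite e mulnC leq_addl.
by rewrite leq_pmul2l.
Qed.

Lemma ar_case q i j : (0 < q)%N -> (i + j = q)%N -> (q %| i)%N -> (q %| j)%N ->
  (i = 0 /\ j = q)%N \/ (i = q /\ j = 0)%N.
Proof.
move=> q0 e di dj; case: (posnP i) => [i0|ip].
  by left; split=> //; rewrite -e i0.
have := dvdn_leq ip di => qi; right; lia.
Qed.

Lemma fin_abs (g0 h0 : int) p u : prime p -> g0 * h0 = (p ^ u)%N%:Z ->
  (u <= vv p g0)%N -> absz h0 = 1%N.
Proof.
move=> pp e le.
have P0 : (0 < p ^ u)%N by rewrite expn_gt0 prime_gt0.
have ea : (absz g0 * absz h0 = p ^ u)%N by rewrite -abszM e.
have g0n : (0 < absz g0)%N by move: P0; rewrite -ea muln_gt0 => /andP[].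
have h0n : (0 < absz h0)%N by move: P0; rewrite -ea muln_gt0 => /andP[].
have d : (p ^ u %| absz g0)%N by rewrite pfactor_dvdn.
apply/eqP; rewrite eqn_leq h0n andbT -(leq_pmul2l g0n) muln1 ea.
exact: dvdn_leq g0n d.
Qed.

Lemma key p q u (F g h : {poly int}) : prime p -> prime q -> (0 < u)%N ->
  ~~ (q %| u)%N -> F`_0 = (p ^ u)%N%:Z -> (forall k, (0 < k < q)%N -> F`_k = 0) ->
  ~~ ((p%:Z) %| F`_q)%Z -> F = g * h ->
  absz g`_0 = 1%N \/ absz h`_0 = 1%N.
Proof.
move=> pp pq u0 qu F0 Fz Fq eF.
have q0 : (0 < q)%N by apply: prime_gt0.
have p0 : (0 < p ^ u)%N by rewrite expn_gt0 prime_gt0.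
have nF0 : F`_0 != 0 by rewrite F0 -lt0n.
have g0 : g != 0 by apply: contra nF0; rewrite eF => /eqP->; rewrite mul0r coef0.
have h0 : h != 0 by apply: contra nF0; rewrite eF => /eqP->; rewrite mulr0 coef0.
have [Mg [i1 [i2 [gi1 egi1 gi2 egi2 [gall gl gr]]]]] := @mindata p q u g g0.
have [Mh [j1 [j2 [hj1 ehj1 hj2 ehj2 [hall hl hr]]]]] := @mindata p q u h h0.
have vF0 : vv p F`_0 = u by rewrite F0 /vv /= pfactorK.
have vFq : vv p F`_q = 0%N.
  rewrite /vv lognE; case: (_ && _) / andP => // [[_ /andP[_ d]]].
  by move: Fq; rewrite dvdzE /= d.
have nFq : F`_q != 0 by apply: contra Fq => /eqP->; apply: dvdz0.
have A : forall k, okw p q u F`_k k (Mg + Mh).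
  move=> k; rewrite eF; apply: coef_ok => // j jk.
  by have := okwM (gall j) (hall (k - j)%N); rewrite subnKC.
have Bl : forall k, (k < i1 + j1)%N -> okw p q u F`_k k (Mg + Mh).+1.
  move=> k lk; rewrite eF; apply: coef_ok => // j jk.
  case: (ltnP j i1) => ji.
    by have := okwM (gl j ji) (hall (k - j)%N); rewrite subnKC // addSn.
  have : (k - j < j1)%N by lia.
  by move=> kj; have := okwM (gall j) (hl _ kj); rewrite subnKC // addnS.
have Br : forall k, (i2 + j2 < k)%N -> okw p q u F`_k k (Mg + Mh).+1.
  move=> k lk; rewrite eF; apply: coef_ok => // j jk.
  case: (ltnP i2 j) => ji.
    by have := okwM (gr j ji) (hall (k - j)%N); rewrite subnKC // addSn.
  have : (j2 < k - j)%N by lia.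
  by move=> kj; have := okwM (gall j) (hr _ kj); rewrite subnKC // addnS.
have El : F`_(i1 + j1) != 0 /\ ww p q u F`_(i1 + j1) (i1 + j1) = (Mg + Mh)%N.
  rewrite eF; apply: (@coef_exact p q u g h (i1 + j1) i1) => //.
  - exact: leq_addr.
  - by rewrite addKn mulf_neq0.
  - rewrite addKn /ww /vv abszM lognM ?absz_gt0 // -egi1 -ehj1 /ww /vv; lia.
  move=> j jk nj; case: (ltnP j i1) => ji.
    by have := okwM (gl j ji) (hall (i1 + j1 - j)%N); rewrite subnKC // addSn.
  have : (i1 + j1 - j < j1)%N.
    by move: nj; rewrite neq_ltn => /orP[|]; lia.
  by move=> kj; have := okwM (gall j) (hl _ kj); rewrite subnKC // addnS.
have Er : F`_(i2 + j2) != 0 /\ ww p q u F`_(i2 + j2) (i2 + j2) = (Mg + Mh)%N.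
  rewrite eF; apply: (@coef_exact p q u g h (i2 + j2) i2) => //.
  - exact: leq_addr.
  - by rewrite addKn mulf_neq0.
  - rewrite addKn /ww /vv abszM lognM ?absz_gt0 // -egi2 -ehj2 /ww /vv; lia.
  move=> j jk nj; case: (ltnP i2 j) => ji.
    by have := okwM (gr j ji) (hall (i2 + j2 - j)%N); rewrite subnKC // addSn.
  have : (j2 < i2 + j2 - j)%N.
    by move: nj; rewrite neq_ltn => /orP[|]; lia.
  by move=> kj; have := okwM (gall j) (hr _ kj); rewrite subnKC // addnS.
have MA : (Mg + Mh <= q * u)%N.
  by have := A 0%N; rewrite /okw (negPf nF0) vF0 /= muln0 addn0.
have cls : forall k, F`_k != 0 -> ww p q u F`_k k = (Mg + Mh)%N ->
    (k = 0 \/ k = q)%N /\ (Mg + Mh = q * u)%N.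
  move=> k nk ek.
  case: (posnP k) => [k0|kpos].
    subst k; move: ek; rewrite /ww vF0 muln0 addn0 => ek; split; [by left|by rewrite -ek mulnC].
  case: (ltnP k q) => [kq|qk].
    by move: nk; rewrite Fz ?kpos ?kq ?eqxx.
  move: qk; rewrite leq_eqVlt => /orP[/eqP qk|qk].
    subst k; move: ek; rewrite /ww vFq => ek; split; [by right|lia].
  have : (u * q < u * k)%N by rewrite ltn_pmul2l.
  move: ek MA; rewrite /ww => <- MA lt; exfalso; exact: (ar1 lt MA (eq_leq (mulnC _ _))).
have [[k1_0|k1_q] eM] := cls _ El.1 El.2.
  have [[k2_0|k2_q] _] := cls _ Er.1 Er.2.
    have := Br q; rewrite k2_0 q0 => /(_ isT).
    by rewrite /okw (negPf nFq) vFq /= eM muln0 add0n mulnC ltnn.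
  move/eqP: k1_0; rewrite addn_eq0 => /andP[/eqP i10 /eqP j10].
  subst i1 j1.
  have di : (q %| i2)%N.
    by apply: (@ar_div q u (vv p g`_0) (vv p g`_i2)) => //; exact: (etrans egi1 (esym egi2)).
  have dj : (q %| j2)%N.
    by apply: (@ar_div q u (vv p h`_0) (vv p h`_j2)) => //; exact: (etrans ehj1 (esym ehj2)).
  have F0' : g`_0 * h`_0 = (p ^ u)%N%:Z by rewrite -coef0M -eF.
  have [[i20 j2q]|[i2q j20]] := ar_case q0 k2_q di dj.
    subst j2; left; apply: (@fin_abs h`_0 g`_0 p u) => //; first by rewrite mulrC.
    by apply: (@ar_ge q u _ (vv p h`_q) q0); exact: (etrans ehj1 (esym ehj2)).
  subst i2; right; apply: (@fin_abs g`_0 h`_0 p u) => //.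
  by apply: (@ar_ge q u _ (vv p g`_q) q0); exact: (etrans egi1 (esym egi2)).
have := Bl 0%N; rewrite k1_q q0 => /(_ isT).
by rewrite /okw (negPf nF0) vF0 /= muln0 addn0 eM ltnn.
Qed.


Lemma coef_sumX (a : nat -> int) lo hi k :
  (\sum_(lo <= i < hi) (a i)%:P * 'X^i)`_k = if (lo <= k < hi)%N then a k else 0.
Proof.
elim: hi => [|hi IH]; first by rewrite big_geq // ltn0 andbF coef0.
case: (leqP lo hi) => lh.
  rewrite big_nat_recr //= coefD IH coefCM coefXn.
  case: (ltngtP k hi) => [kh|kh|->].
  - by rewrite ltnS (ltnW kh) andbT mulr0 addr0.
  - by rewrite andbF ltnS (leqNgt k hi) kh andbF mulr0 addr0.
  - by rewrite andbF lh ltnSn mulr1 add0r.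
rewrite big_geq // coef0; case: (leqP lo k) => //= lk.
by rewrite ltnS leqNgt (leq_trans lh lk).
Qed.

Lemma prod_gt1 (rs : seq algC) : rs != [::] -> (forall z, z \in rs -> 1 < `|z|) ->
  1 < \prod_(z <- rs) `|z|.
Proof.
elim: rs => // z rs IH _ H; rewrite big_cons.
have hz : 1 < `|z| by apply: H; rewrite inE eqxx.
case: rs IH H => [|w rs] IH H; first by rewrite big_nil mulr1.
have h : 1 < \prod_(y <- w :: rs) `|y|.
  by apply: IH => // y hy; apply: H; rewrite inE hy orbT.
by rewrite -[X in X < _]mulr1; apply: ltr_pM.
Qed.

Lemma normintr_ge1 (x : int) : x != 0 -> 1 <= `|x%:~R : algC|.
Proof. by move=> nx; rewrite -intr_norm -abszE ler1n absz_gt0. Qed.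

Lemma normintr_abs (x : int) : `|x%:~R : algC| = (`|x|)%:~R.
Proof. by rewrite intr_norm. Qed.

Lemma root_lem (a : nat -> int) p q u n (d e : {poly int}) :
  (1 < size d)%N -> fpoly a p u q n = d * e -> absz d`_0 = 1%N ->
  \sum_(q <= i < n.+1) `|a i| < (p ^ u)%N%:Z -> False.
Proof.
move=> sd ef d01 hbig.
pose D := map_poly (intr : int -> algC) d.
have [rs Drs] := closed_field_poly_normal D.
have sD : size D = size d by apply: size_map_inj_poly; [exact: intr_inj|exact: rmorph0].
have dn0 : d != 0 by rewrite -size_poly_gt0 ltnW.
have lD : lead_coef D = (lead_coef d)%:~R.
  by apply: lead_coef_map_inj; [exact: intr_inj|exact: rmorph0].
have lDn : lead_coef D != 0 by rewrite lD intr_eq0 lead_coef_eq0.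
have rsn : rs != [::].
  apply/eqP=> r0; move: sd; rewrite -sD Drs r0 size_scale // big_nil size_poly1.
  by [].
have D0 : `|D.[0]| = 1.
  by rewrite horner_coef0 coef_map /= normintr_abs -abszE d01.
have [z zrs zle] : exists2 z, z \in rs & `|z| <= 1.
  case: (boolP (has (fun z => `|z| <= 1) rs)) => [/hasP[z zr zl]|hn].
    by exists z.
  exfalso.
  have gt : forall z, z \in rs -> 1 < `|z|.
    move=> z zr; rewrite real_ltNge ?normr_real ?real1 //.
    by move/hasPn: hn; apply.
  have P1 := prod_gt1 rsn gt.
  have L1 : 1 <= `|lead_coef D| by rewrite lD normintr_ge1 // lead_coef_eq0.
  have : `|D.[0]| = `|lead_coef D| * \prod_(z <- rs) `|z|.
    rewrite {1}Drs hornerZ horner_prod normrM normr_prod; congr (_ * _).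
    by apply: eq_bigr => y _; rewrite hornerXsubC sub0r normrN.
  rewrite D0 => e1.
  have : \prod_(z <- rs) `|z| <= `|lead_coef D| * \prod_(z <- rs) `|z|.
    by apply: ler_peMl => //; apply: le_trans (ltW P1); rewrite ler01.
  by rewrite -e1 => /(lt_le_trans P1); rewrite ltxx.
have rz : root D z by rewrite Drs rootZ // root_prod_XsubC.
pose E := map_poly (intr : int -> algC) e.
have Fz : (map_poly (intr : int -> algC) (fpoly a p u q n)).[z] = 0.
  by rewrite ef rmorphM /= hornerM -/D (eqP rz) mul0r.
move: Fz; rewrite /fpoly rmorphD /= map_polyC rmorph_sum hornerD hornerC horner_sum /=.
under eq_bigr => i _ do rewrite rmorphM /= map_polyC map_polyXn hornerCM hornerXn.
set S := \sum_(_ <= _ < _) _ => eS.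
have eP : ((p ^ u)%N%:Z)%:~R = - S :> algC by apply/eqP; rewrite -addr_eq0 eS.
have eR : (\sum_(q <= i < n.+1) `|a i|)%:~R = \sum_(q <= i < n.+1) (`|a i|)%:~R :> algC.
  by rewrite rmorph_sum.
have h1 : `|S| <= (\sum_(q <= i < n.+1) `|a i|)%:~R.
  rewrite eR; apply: le_trans (ler_norm_sum _ _ _) _.
  apply: ler_sum => i _; rewrite normrM normrX -normintr_abs.
  rewrite -[X in _ <= X]mulr1; apply: ler_wpM2l => //.
  by apply: exprn_ile1.
have h2 : `|S| = ((p ^ u)%N%:Z)%:~R by rewrite -normrN -eP normintr_abs.
by move: h1; rewrite h2 ler_int leNgt hbig.
Qed.

Unset Implicit Arguments. Set Strict Implicit.

Theorem corollary1 (p q u n : nat) (a : nat -> int)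
  (hp : prime p) (hq : prime q) (hu : (1 <= u)%N) (hn : (q <= n)%N)
  (han : a n != 0)
  (hpq : ~~ (p%:Z %| a q)%Z)
  (hqu : ~~ (q %| u)%N)
  (hbig : \sum_(q <= i < n.+1) `|a i| < (p ^ u)%N%:Z) :
  irreducible_poly (map_poly (intr : int -> rat) (fpoly a p u q n)).
Proof.
set f := fpoly a p u q n.
have cf : forall k, f`_k = (if k == 0%N then (p ^ u)%N%:Z else 0)
    + (if (q <= k < n.+1)%N then a k else 0).
  by move=> k; rewrite /f /fpoly coefD coefC coef_sumX.
have q1 : (1 < q)%N by apply: prime_gt1.
have F0 : f`_0 = (p ^ u)%N%:Z by rewrite cf eqxx leqNgt (ltn_trans _ q1) // addr0.
have Fz : forall k, (0 < k < q)%N -> f`_k = 0.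
  move=> k /andP[k0 kq]; rewrite cf (gtn_eqF k0) (leqNgt q k) kq /=.
  by rewrite addr0.
have Fq : f`_q = a q.
  by rewrite cf leqnn ltnS hn /= (gtn_eqF (ltnW q1)) add0r.
have aq0 : a q != 0 by apply: contra hpq => /eqP->; apply: dvdz0.
have fq : f`_q != 0 by rewrite Fq.
have sf : (1 < size f)%N by exact: ltn_trans q1 (coef_lt_size fq).
have fn0 : f != 0 by rewrite -size_poly_gt0 (ltnW sf).
split; first by rewrite size_rat_int_poly.
move=> d sd dd.
have [p1 [c c0 Dd] [r er]] := dvdpP_rat_int dd.
have p10 : p1 != 0 by apply: contra fn0; rewrite er => /eqP->; rewrite mul0r.
have r0 : r != 0 by apply: contra fn0; rewrite er => /eqP->; rewrite mulr0.
have sdp : size d = size p1 by rewrite Dd size_scale // size_rat_int_poly.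
have Fq' : ~~ ((p%:Z) %| f`_q)%Z by rewrite Fq.
have [H|H] := key hp hq hu hqu F0 Fz Fq' er.
  exfalso; case: (ltnP 1 (size p1)) => s1.
    exact: root_lem s1 er H hbig.
  move: sd; rewrite sdp; move: p10; rewrite -size_poly_gt0; move: s1.
  by case: (size p1) => [|[|]].
case: (ltnP 1 (size r)) => s1.
  by exfalso; apply: (root_lem s1 _ H hbig); rewrite -/f er mulrC.
have sr : size r = 1%N.
  by move: r0 s1; rewrite -size_poly_gt0; case: (size r) => [|[|]].
rewrite -dvdp_size_eqp // size_rat_int_poly -/f sdp er size_mul // sr addn1.
by [].
Qed.
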